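(* Let $X$ be a real linear space, $T$ an infinite index set, and $f, f_t : X \to \overline{\mathbb{R}} := \mathbb{R}\cup\{\pm\infty\}$ ($t \in T$) convex proper functions. Let $M := \bigcap_{t\in T} \operatorname{dom} f_t$. Let $v:\mathbb{R}^T\to\overline{\mathbb{R}}$ be $v(y) := \inf\{f(x) : f_t(x)\le y_t \text{ for all } t\in T\}$, where $\mathbb{R}^T$ carries the product topology, and let $\overline{v}$ be the lower semicontinuous hull of $v$, so that $\overline{v}(0_Y) = \sup_{V} \inf_{y\in V} v(y)$, the supremum being over all neighborhoods $V$ of the origin $0_Y$ of $\mathbb{R}^T$. Then $$\overline{v}(0_Y)=\sup_{\varepsilon>0,\ H\in\mathcal{F}(T)}\ \inf_{x\in M}\{f(x): f_t(x)\le\varepsilon \text{ for all } t\in H\}.$$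
   Context: $\operatorname{dom} g := \{x : g(x)<+\infty\}$; a proper function never takes the value $-\infty$ and has nonempty domain. $\mathcal{F}(T)$ is the family of nonempty finite subsets of $T$. Convention: $\inf\emptyset=+\infty$. *)

(* Defs.v *)
From HB Require Import structures.
From mathcomp Require Import all_boot all_order all_algebra.
From mathcomp Require Import all_classical all_reals all_analysis.
Set Implicit Arguments. Unset Strict Implicit. Unset Printing Implicit Defensive.
Import Order.TTheory GRing.Theory Num.Theory.
Local Open Scope classical_set_scope.
Local Open Scope ring_scope.

Definition edom (R : realType) (X : Type) (g : X -> \bar R) : set X :=
  [set x | (g x < +oo)%E].

Definition proper_fun (R : realType) (X : Type) (g : X -> \bar R) : Prop :=
  (forall x, g x != -oo%E) /\ (edom g !=set0).

(* convexity of an extended-real-valued function that never takes -oo: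
   the usual inequality, required on the domain (equivalently convex epigraph) *)
Definition econvex (R : realType) (X : lmodType R) (g : X -> \bar R) : Prop :=
  forall (x y : X) (l : R), 0 <= l <= 1 ->
    (g (l *: x + (1 - l) *: y)%R <= (l%:E * g x + (1 - l)%:E * g y)%E)%E.

Definition valfun (R : realType) (X : Type) (T : Type)
  (f : X -> \bar R) (ft : T -> X -> \bar R) (y : T -> R) : \bar R :=
  ereal_inf [set f x | x in [set x | forall t, (ft t x <= (y t)%:E)%E]].

(* Main.v *)
Require Import Defs.
From HB Require Import structures.
From mathcomp Require Import all_boot all_order all_algebra.
From mathcomp Require Import all_classical all_reals all_analysis.
Import Order.TTheory GRing.Theory Num.Theory.
Local Open Scope classical_set_scope.
Local Open Scope ring_scope.

Section S.
Variables (R : realType) (T : Type).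
Notation Y := {ptws T -> R^o}.

Lemma L1 (t : T) (e : R) : 0 < e -> @nbhs _ Y (fun=> 0) [set y : Y | `|y t| < e].
Proof.
move=> e0.
have : (@nbhs _ Y (fun=> 0)) --> ((fun=> 0) : Y) by apply: cvg_id.
move=> /cvg_sup/(_ t)/cvg_image h.
have /h : [set f t | f in [set: Y]] = [set: R^o].
  by apply/seteqP; split=> // r _; exists (fun=> r).
move=> /(_ [set x : R^o | `|x| < e]).
have : nbhs (0 : R^o) [set x : R^o | `|x| < e].
  by exists e => // z /=; rewrite sub0r normrN.
move=> /[swap] /[apply] -[A nA sA].
apply: filterS nA => y Ay.
have : [set f t | f in A] (y t) by exists y.
by rewrite sA.
Qed.

Definition U (e : R) (H : set T) := [set y : Y | forall t, H t -> `|y t| < e].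
Definition DI := [set p : R * set T | 0 < p.1 /\ finite_set p.2 /\ p.2 !=set0].

Lemma L2 (t0 : T) (V : set Y) : @nbhs _ Y (fun=> 0) V ->
  exists2 p, DI p & U p.1 p.2 `<=` V.
Proof.
have FF : Filter (filter_from DI (fun p => U p.1 p.2)).
  apply: filter_from_filter.
    exists (1, [set t0]); split => //; split; [exact: finite_set1 | by exists t0].
  move=> [e1 H1] [e2 H2] [/= e10 [fH1 [t1 H1t1]]] [/= e20 [fH2 _]].
  exists (Num.min e1 e2, H1 `|` H2).
    split; first by rewrite /= lt_min e10 e20.
    split; first by rewrite /= finite_setU; split.
    by exists t1; left.
  move=> y /= Uy; split => t Ht.
    by apply: (lt_le_trans (Uy t _)); [left | rewrite ge_min lexx].
  by apply: (lt_le_trans (Uy t _)); [right | rewrite ge_min lexx orbT].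
suff : filter_from DI (fun p => U p.1 p.2) --> ((fun=> 0) : Y).
  by move=> /(_ V) h /h [p Dp sp]; exists p.
apply/cvg_sup => t.
apply/cvg_image.
  by apply/seteqP; split=> // r _; exists (fun=> r).
move=> W /= nW.
have [e /= e0 eW] : exists2 e : R, 0 < e & [set x : R | `|x| < e] `<=` W.
  move: nW => /nbhs_ballP [e /= e0 be]; exists e => // x xe; apply: be.
  by rewrite /ball /= sub0r normrN.
exists [set y : Y | W (y t)].
  exists (e, [set t]); first by split => //; split; [exact: finite_set1 | by exists t].
  by move=> y /= Uy; apply: eW; apply: Uy.
by apply/seteqP; split=> [r [y Wy <-] //| r Wr]; exists (fun=> r).
Qed.

End S.

Section S2.
Variables (R : realType) (T : Type).
Notation Y := {ptws T -> R^o}.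
Lemma L3 (e : R) (H : set T) : 0 < e -> finite_set H -> @nbhs _ Y (fun=> 0) (@U R T e H).
Proof.
move=> e0 fH.
have [D HD] := (@finite_fsetP {classic T} H).1 fH.
have hb := @filter_bigI Y {classic T} D (fun t => [set y : Y | `|y t| < e]) (@nbhs _ Y (fun=> 0)) (nbhs_filter _) (fun t _ => @L1 R T t e e0).
apply: filterS hb => y Hy t Ht; apply: Hy; rewrite -HD //.
Qed.
End S2.

Theorem lemma2p1 (R : realType) (X : lmodType R) (T : Type)
  (f : X -> \bar R) (ft : T -> X -> \bar R) :
  infinite_set [set: T] ->
  econvex f -> proper_fun f ->
  (forall t, econvex (ft t)) -> (forall t, proper_fun (ft t)) ->
  let M := \bigcap_(t in [set: T]) edom (ft t) in
  let v := valfun f ft in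
  ereal_sup [set ereal_inf (v @` V) |
              V in [set V : set {ptws T -> R^o} | @nbhs _ {ptws T -> R^o} (fun=> 0) V]]
  = ereal_sup [set ereal_inf [set f x | x in
                  [set x | M x /\ forall t, eH.2 t -> (ft t x <= eH.1%:E)%E]] |
               eH in [set eH : R * set T |
                        0 < eH.1 /\ finite_set eH.2 /\ eH.2 !=set0]].
Proof.
move=> Tinf _ _ _ Pft M v.
have [t0 _] := infinite_setN0 Tinf.
apply/eqP; rewrite eq_le; apply/andP; split.
- apply: ge_ereal_sup => _ [V nV <-].
  have [[e H] [/= e0 [fH H0]] sV] := @L2 R T t0 V nV.
  apply: (@le_trans _ _ (ereal_inf [set f x | x in
                  [set x | M x /\ forall t, H t -> (ft t x <= (e / 2)%:E)%E]])).
    apply: le_ereal_inf_tmp => _ [x [Mx Hx] <-].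
    pose y : {ptws T -> R^o} := fun t => if `[< H t >] then e / 2 else fine (ft t x).
    have Vy : V y.
      apply: sV => t /= Ht; rewrite /y asboolT //.
      rewrite ger0_norm ?divr_ge0 ?ltW // ltr_pdivrMr // ltr_pMr //.
      by rewrite ltr1n.
    apply: (@le_trans _ _ (v y)); first by apply: ereal_inf_lbound; exists y.
    apply: ereal_inf_lbound; exists x => // t.
    rewrite /y; case: asboolP => [Ht|_]; first exact: Hx.
    have Mxt : (ft t x < +oo)%E := Mx t I.
    have := (Pft t).1 x.
    by case: (ft t x) Mxt => //= r.
  apply: ereal_sup_ubound; exists (e / 2, H) => //; split => /=.
    by rewrite divr_gt0.
  by split.
- apply: ge_ereal_sup => _ [[e H] [/= e0 [fH H0]] <-].
  apply: (@le_trans _ _ (ereal_inf (v @` U R T e H))); last first.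
    by apply: ereal_sup_ubound; exists (U R T e H) => //; exact: L3.
  apply: le_ereal_inf_tmp => _ [y Uy <-].
  apply: le_ereal_inf_tmp => _ [x Hx <-].
  apply: ereal_inf_lbound; exists x => //; split.
    by move=> t _; apply: le_lt_trans (Hx t) _; rewrite ltry.
  move=> t Ht; apply: (le_trans (Hx t)); rewrite lee_fin.
  by apply: ltW; apply: le_lt_trans (Uy t Ht); exact: ler_norm.
Qed.
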